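(* Let $d\ge2$, let $\Omega\subset\mathbb R^d$ be a nonempty bounded open convex polytope, and suppose $\mathfrak E=\{e_1,\dots,e_p\}\subset\mathbb R^d$ is weakly incoming to $\Omega$. Then there exist $r>0$ and $\epsilon\in]0,1]$ such that for every $x_0\in\overline\Omega$ there exist $q\in\{1,\dots,p\}$ and $\theta_q\in\{\pm1\}$ with $$x+t\theta_qe_q\in\Omega\qquad\text{for all }x\in B(x_0,r)\cap\Omega\text{ and all }t\in[0,\epsilon].$$
   Context: $\Omega=\{x\in\mathbb R^d:\ \ell_j(x)>b_j,\ j=1,\dots,m\}$ for linear forms $\ell_j$ and reals $b_j$. Define $\mathrm c:\mathbb R^d\to\mathbb N\cup\{+\infty\}$ by $\mathrm c(x)=0$ if $x\in\Omega$, $+\infty$ if $x\notin\overline\Omega$, $\#\{i:\ell_i(x)=b_i\}$ if $x\in\partial\Omega$. $\mathfrak E$ is weakly incoming to $\Omega$ if for every $x_0\in\partial\Omega$ there exist $\epsilon>0$, $\theta\in\{\pm1\}$, $e\in\mathfrak E$ with $\mathrm c(x_0+\theta te)<\mathrm c(x_0)$ for all $t\in]0,\epsilon]$. $B(x_0,r)$ is the open ball of radius $r$ about $x_0$. *)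

(* Defs.v *)
From HB Require Import structures.
From mathcomp Require Import all_boot all_order all_algebra.
From mathcomp Require Import all_classical all_reals all_analysis.
Set Implicit Arguments. Unset Strict Implicit. Unset Printing Implicit Defensive.
Import Order.TTheory GRing.Theory Num.Theory.
Import numFieldNormedType.Exports.
Local Open Scope classical_set_scope.
Local Open Scope ring_scope.

Definition lform (R : realType) (d : nat) (a x : 'rV[R]_d) : R :=
  \sum_(i < d) a 0 i * x 0 i.

Definition enorm (R : realType) (d : nat) (x : 'rV[R]_d) : R :=
  Num.sqrt (\sum_(i < d) x 0 i ^+ 2).

Definition eball (R : realType) (d : nat) (x0 : 'rV[R]_d) (r : R) : set 'rV[R]_d :=
  [set x | enorm (x - x0) < r].

Definition polyOmega (R : realType) (d m : nat) (a : 'I_m -> 'rV[R]_d)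
  (b : 'I_m -> R) : set 'rV[R]_d :=
  [set x | forall j, b j < lform (a j) x].

(* Boundary of Omega: closure minus Omega (Omega is open). *)
Definition polyBoundary (R : realType) (d m : nat) (a : 'I_m -> 'rV[R]_d)
  (b : 'I_m -> R) : set 'rV[R]_d :=
  closure (polyOmega a b) `\` polyOmega a b.

(* The counting function c : R^d -> N u {+oo}, valued in \bar R. *)
Definition ccount (R : realType) (d m : nat) (a : 'I_m -> 'rV[R]_d)
  (b : 'I_m -> R) (x : 'rV[R]_d) : \bar R :=
  if x \in polyOmega a b then 0%E
  else if x \notin closure (polyOmega a b) then +oo%E
  else ((#|[set i : 'I_m | lform (a i) x == b i]|)%:R)%:E.

Definition weakly_incoming (R : realType) (d m p : nat) (a : 'I_m -> 'rV[R]_d)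
  (b : 'I_m -> R) (e : 'I_p -> 'rV[R]_d) : Prop :=
  forall x0, polyBoundary a b x0 ->
    exists eps : R, 0 < eps /\
    exists theta : R, (theta = 1 \/ theta = -1) /\
    exists q : 'I_p,
      forall t : R, 0 < t -> t <= eps ->
        (ccount a b (x0 + (theta * t) *: e q) < ccount a b x0)%E.

(* Main.v *)
Require Import Defs.
From HB Require Import structures.
From mathcomp Require Import all_boot all_order all_algebra.
From mathcomp Require Import all_classical all_reals all_analysis.
From mathcomp Require Import ring lra.
Import Order.TTheory GRing.Theory Num.Theory.
Import numFieldNormedType.Exports.
Local Open Scope classical_set_scope.
Local Open Scope ring_scope.
Lemma lformD {R : realType} {d : nat} (a x y : 'rV[R]_d) : lform a (x + y) = lform a x + lform a y.
Proof. by rewrite /lform -big_split /=; apply: eq_bigr => i _; rewrite mxE mulrDr. Qed.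

Lemma lformB {R : realType} {d : nat} (a x y : 'rV[R]_d) : lform a (x - y) = lform a x - lform a y.
Proof. by rewrite /lform -sumrB /=; apply: eq_bigr => i _; rewrite !mxE mulrBr. Qed.

Lemma lformZ {R : realType} {d : nat} (a x : 'rV[R]_d) c : lform a (c *: x) = c * lform a x.
Proof. by rewrite /lform mulr_sumr; apply: eq_bigr => i _; rewrite mxE mulrCA. Qed.

Lemma lform_bound {R : realType} {d : nat} (a z : 'rV[R]_d) M :
  (forall i, `|z 0 i| <= M) -> `|lform a z| <= (\sum_i `|a 0 i|) * M.
Proof.
move=> H; rewrite /lform mulr_suml; apply: le_trans (ler_norm_sum _ _ _) _.
by apply: ler_sum => i _; rewrite normrM; apply: ler_wpM2l.
Qed.

Lemma coord_le_mxnorm {R : realType} {d : nat} (z : 'rV[R]_d) i : `|z 0 i| <= `|z|.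
Proof.
rewrite [leRHS]/Num.norm /= mx_normrE.
by apply/bigmax_geP; right; exists (0, i).
Qed.

Lemma coord_le_enorm {R : realType} {d : nat} (z : 'rV[R]_d) i : `|z 0 i| <= enorm z.
Proof.
rewrite /enorm -sqrtr_sqr ler_sqrt ?sumr_ge0 // => [|k _]; last exact: sqr_ge0.
by rewrite (bigD1 i) //= lerDl sumr_ge0 // => k _; exact: sqr_ge0.
Qed.

Lemma mxnorm_le_enorm {R : realType} {d : nat} (z : 'rV[R]_d) : `|z| <= enorm z.
Proof.
rewrite [leLHS]/Num.norm /= mx_normrE.
apply/bigmax_leP; split; first exact: sqrtr_ge0.
by move=> [i k] _ /=; rewrite (ord1 i); exact: coord_le_enorm.
Qed.

Lemma sumabs_ge0 {R : realType} {d : nat} (a : 'rV[R]_d) : 0 <= \sum_i `|a 0 i|.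
Proof. by apply: sumr_ge0. Qed.
Lemma lform_lip {R : realType} {d : nat} (a x z : 'rV[R]_d) :
  `|lform a z - lform a x| <= (\sum_i `|a 0 i|) * `|z - x|.
Proof. by rewrite -lformB; apply: lform_bound => i; exact: coord_le_mxnorm. Qed.

Lemma closure_half {R : realType} {d m : nat} (a : 'I_m -> 'rV[R]_d) b x j :
  closure (polyOmega a b) x -> b j <= lform (a j) x.
Proof.
move=> cx; rewrite leNgt; apply/negP => hlt.
set C := \sum_i `|a j 0 i|.
have C0 : 0 <= C by exact: sumabs_ge0.
pose del := (b j - lform (a j) x) / (C + 1).
have hd : del * (C + 1) = b j - lform (a j) x by rewrite divfK //; lra.
have del0 : 0 < del by rewrite divr_gt0 //; lra.
have [z [Oz bz]] := cx _ (nbhsx_ballx x del del0).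
move: bz; rewrite -ball_normE /ball_ /= distrC => bz.
have h1 := lform_lip (a j) x z; rewrite -/C in h1.
have h2 : C * `|z - x| <= C * del by apply: ler_wpM2l => //; exact: ltW.
have h3 := Oz j.
have h4 := ler_norm (lform (a j) z - lform (a j) x).
have h5 : C * del + del = del * (C + 1) by ring.
lra.
Qed.

Lemma ccount_closure {R : realType} {d m : nat} (a : 'I_m -> 'rV[R]_d) b z y :
  (ccount a b z < y)%E -> closure (polyOmega a b) z.
Proof.
rewrite /ccount; case: ifPn => [/set_mem Oz _|_]; first exact: subset_closure.
case: ifPn => [_|]; first by rewrite ltNge leey.
by rewrite negbK => /set_mem.
Qed.

Lemma lform_cont {R : realType} {d : nat} (a : 'rV[R]_d) : continuous (lform a).
Proof.
move=> x; have FF : Filter (nbhs x) by exact: nbhs_filter.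
apply/cvgrPdist_lt => eps eps0.
set C := \sum_i `|a 0 i|.
have C0 : 0 <= C by exact: sumabs_ge0.
pose del := eps / (C + 1).
have hd : del * (C + 1) = eps by rewrite divfK //; lra.
have del0 : 0 < del by rewrite divr_gt0 //; lra.
apply: (@filterS _ _ FF _ _ _ (nbhsx_ballx x del del0)) => z.
rewrite -ball_normE /ball_ /= distrC => bz.
have h1 := lform_lip a x z; rewrite -/C in h1.
rewrite distrC.
have h2 : C * `|z - x| <= C * del by apply: ler_wpM2l => //; exact: ltW.
have h5 : C * del + del = del * (C + 1) by ring.
lra.
Qed.

Lemma good_dir_boundary {R : realType} {d m p : nat} (a : 'I_m -> 'rV[R]_d) b
  (e : 'I_p -> 'rV[R]_d) x0 :
  weakly_incoming a b e -> polyBoundary a b x0 ->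
  exists q : 'I_p, exists th : R, (th = 1 \/ th = -1) /\
    forall j, lform (a j) (th *: e q) < 0 -> b j < lform (a j) x0.
Proof.
move=> wi bx; have [eps [eps0 [th [hth [q H]]]]] := wi x0 bx.
exists q, th; split => // j hj.
have cz := ccount_closure a b _ _ (H eps eps0 (lexx _)).
have := closure_half a b _ j cz.
rewrite lformD mulrC -scalerA lformZ => h.
have : eps * lform (a j) (th *: e q) < 0 by rewrite pmulr_rlt0.
lra.
Qed.
Lemma closure_bounded {R : realType} {d m : nat} (a : 'I_m -> 'rV[R]_d) b M :
  (forall x, polyOmega a b x -> enorm x <= M) ->
  forall x, closure (polyOmega a b) x -> `|x| <= M + 1.
Proof.
move=> hM x cx.
have [z [Oz bz]] := cx _ (nbhsx_ballx x 1 ltr01).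
move: bz; rewrite -ball_normE /ball_ /= => bz.
have h1 := mxnorm_le_enorm z; have h2 := hM z Oz.
have h := ler_normD (x - z) z; rewrite subrK in h.
apply: (le_trans h); rewrite addrC; apply: lerD; [exact: le_trans h1 h2 | exact: ltW].
Qed.

Lemma closure_compact {R : realType} {d m : nat} (a : 'I_m -> 'rV[R]_d) b :
  (exists M : R, forall x, polyOmega a b x -> enorm x <= M) ->
  compact (closure (polyOmega a b)).
Proof.
move=> [M hM]; apply: bounded_closed_compact; last exact: closed_closure.
exists (M + 1); split; first exact: num_real.
move=> N hN x cx; apply: le_trans (closure_bounded a b M hM x cx) _; exact: ltW.
Qed.

Lemma lower_of_abs {R : realType} (x c : R) : `|x| <= c -> -c <= x.
Proof. by rewrite ler_norml => /andP[]. Qed.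

Lemma boundary_exists {R : realType} {d m : nat} (a : 'I_m -> 'rV[R]_d) b :
  (0 < d)%N -> polyOmega a b !=set0 ->
  (exists M : R, forall x, polyOmega a b x -> enorm x <= M) ->
  exists y, polyBoundary a b y.
Proof.
move=> d0 [x0 Ox0] hM.
have cK := closure_compact a b hM.
pose i0 : 'I_d := Ordinal d0.
pose u : 'rV[R]_d := \row_k (k == i0)%:R.
have hf : {within closure (polyOmega a b), continuous (lform u)}.
  by apply: continuous_subspaceT; exact: lform_cont.
have [y /set_mem cy ymax] :=
  compact_EVT_max (ex_intro _ x0 (subset_closure Ox0)) cK hf.
exists y; split => // Oy.
have uu : lform u u = 1.
  rewrite /lform (bigD1 i0) //= big1 => [|k /negPf hk].
    by rewrite !mxE eqxx mulr1 addr0.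
  by rewrite !mxE hk mulr0.
have H : \forall s \near (0:R)^'+, forall j, b j < lform (a j) (y + s *: u).
  apply: filter_forall => j.
  set L := lform (a j) u; set c := lform (a j) y - b j.
  have c0 : 0 < c by rewrite subr_gt0; exact: Oy j.
  have L0 : 0 <= `|L| by [].
  have del0 : 0 < c / (`|L| + 1) by rewrite divr_gt0 //; lra.
  apply: filterS (filterI (nbhs_right_gt 0) (nbhs_right_lt del0)) => s [/= s0 sd].
  rewrite lformD lformZ -/L.
  have hs : s * (`|L| + 1) < c by rewrite -ltr_pdivlMr //; lra.
  have hL2 := ler_norm (- L); rewrite normrN in hL2.
  rewrite /c in c0 hs.
  nra.
have [s [s0 Hs]] := filter_ex (filterI (nbhs_right_gt 0) H).
have Oz : polyOmega a b (y + s *: u) by exact: Hs.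
have := ymax _ (mem_set (subset_closure Oz)).
rewrite lformD lformZ uu; lra.
Qed.
Lemma local_ok {R : realType} {d m p : nat} (a : 'I_m -> 'rV[R]_d) b
  (e : 'I_p -> 'rV[R]_d) (q : 'I_p) (th : R) (x0 : 'rV[R]_d) (j : 'I_m) :
  (lform (a j) (th *: e q) < 0 -> b j < lform (a j) x0) ->
  \forall x' \near x0 & s \near (0:R)^'+,
    forall y, (eball x' s `&` polyOmega a b) y -> forall t, 0 <= t -> t <= s ->
      b j < lform (a j) (y + (t * th) *: e q).
Proof.
set L := lform (a j) (th *: e q).
case: (ltP L 0) => hL hg; last first.
  apply: filterE => -[x' s] /= y [_ Oy] t t0 ts.
  rewrite lformD -scalerA lformZ -/L.
  have := Oy j; have : 0 <= t * L by exact: mulr_ge0.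
  lra.
have c0 : 0 < lform (a j) x0 - b j by rewrite subr_gt0; exact: hg.
set c := lform (a j) x0 - b j in c0.
set C := \sum_i `|a j 0 i|.
have C0 : 0 <= C by exact: sumabs_ge0.
pose del := c / (C + C - L + 1).
have hd : del * (C + C - L + 1) = c by rewrite divfK //; lra.
have del0 : 0 < del by rewrite divr_gt0 //; lra.
exists (ball x0 del, fun s => 0 < s /\ s < del).
  split; first exact: nbhsx_ballx.
  exact: filterI (nbhs_right_gt 0) (nbhs_right_lt del0).
move=> [x' s] /= [bx [s0 sd]] y [ey Oy] t t0 ts.
move: bx ey; rewrite -ball_normE /ball_ /= /eball /= => bx ey.
rewrite lformD -scalerA lformZ -/L.
have E2 : `|lform (a j) (y - x')| <= C * enorm (y - x').
  by apply: lform_bound => i; exact: coord_le_enorm.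
rewrite lformB in E2.
have E2' : C * enorm (y - x') <= C * del.
  by apply: ler_wpM2l => //; apply: ltW; lra.
have E3 := lform_lip (a j) x0 x'; rewrite -/C [`|x' - x0|]distrC in E3.
have E3' : C * `|x0 - x'| <= C * del by apply: ler_wpM2l => //; exact: ltW.
have E4 : del * L <= t * L by rewrite ler_wnM2r //; try lra; exact: ltW.
have A2 := lower_of_abs _ _ E2.
have A3 := lower_of_abs _ _ E3.
rewrite /c in hd.
nra.
Qed.
Theorem corollary1p4 (R : realType) (d m p : nat)
  (a : 'I_m -> 'rV[R]_d) (b : 'I_m -> R) (e : 'I_p -> 'rV[R]_d) :
  (2 <= d)%N ->
  polyOmega a b !=set0 ->
  (exists M : R, forall x, polyOmega a b x -> enorm x <= M) ->
  weakly_incoming a b e ->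
  exists r : R, 0 < r /\
  exists eps : R, 0 < eps /\ eps <= 1 /\
  forall x0, closure (polyOmega a b) x0 ->
    exists q : 'I_p, exists theta : R, (theta = 1 \/ theta = -1) /\
      forall x, (eball x0 r `&` polyOmega a b) x ->
        forall t : R, 0 <= t -> t <= eps ->
          polyOmega a b (x + (t * theta) *: e q).
Proof.
move=> d2 ne hM wi.
have d0 : (0 < d)%N by apply: leq_trans d2.
have [y0 by0] := boundary_exists a b d0 ne hM.
have [q0 _] := good_dir_boundary a b e y0 wi by0.
have good : forall x0, closure (polyOmega a b) x0 ->
    exists q : 'I_p, exists th : R, (th = 1 \/ th = -1) /\
    forall j, lform (a j) (th *: e q) < 0 -> b j < lform (a j) x0.
  move=> x0 cx; have [Ox|nOx] := pselect (polyOmega a b x0).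
    by exists q0, 1; split; [left | move=> j _; exact: Ox j].
  exact: good_dir_boundary a b e x0 wi (conj cx nOx).
pose P := fun (s : R) (x : 'rV[R]_d) => exists q : 'I_p, exists th : R,
  (th = 1 \/ th = -1) /\ forall y, (eball x s `&` polyOmega a b) y ->
  forall t, 0 <= t -> t <= s -> polyOmega a b (y + (t * th) *: e q).
have cK := closure_compact a b hM.
have nc := (near_covering_withinP _).2 ((compact_near_coveringP _).1 cK).
have H : \forall s \near (0:R)^'+, closure (polyOmega a b) `<=` P s.
  apply: (nc R ((0:R)^'+) P _) => x0 cx.
  have [q [th [hth hg]]] := good x0 cx.
  have Hf := @filter_forall _ _ _ _ _ (fun j => local_ok a b e q th x0 j (hg j)).
  have Hf2 := Hf ltac:(exact: filter_prod_filter).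
  move: Hf2; apply: filterS => -[x' s] /= Hall cx'.
  exists q, th; split => // y hy t t0 ts j.
  exact: Hall j y hy t t0 ts.
have [s [[s0 s1] Hs]] :=
  filter_ex (filterI (filterI (nbhs_right_gt 0) (nbhs_right_le (@ltr01 R))) H).
exists s; split => //; exists s; split => //; split => //.
Qed.
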